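(* Under the assumptions of Theorem 4.1 (with $k\ge1$), define $$h^{(u)}(D_A)=\min\Big\{H(D_U)+\sum_{t=1}^k H(W_t),\ -\sum_{t=1}^k\log(1-P_{W_t})\Big\}$$ and, writing $\pi=\prod_{t=1}^k P_{W_t}$, $$h^{(l)}(D_A)=\max\Big\{-\sum_{t=1}^k\log P_{W_t},\ H(D_U)+\sum_{t=1}^kH(W_t)+\pi\log\pi+(1-\pi)\log(1-\pi)-(1-\pi)\min\{\log(2^k-1),H(D_U)\}\Big\}.$$ Then $h^{(l)}(D_A)\le H(D_A)\le h^{(u)}(D_A)$.
   Context: A result set $R$ is a finite set of possible matchings $m_j\subseteq C$ with $\mathbb{P}:R\to[0,1]$ summing to 1; the correct matching $M$ is distributed by $\mathbb{P}$. For distinct $c_1,\dots,c_k\in C$ and accuracies $P_{W_1},\dots,P_{W_k}\in[0.5,1]$, the answers $A_{c_t}\in\{Y,N\}$ are conditionally independent given $M$, with $\mathbb{P}(A_{c_t}=Y\mid M)=P_{W_t}$ if $c_t\in M$ and $1-P_{W_t}$ otherwise. $H(D_A)=-\sum_{a\in\{Y,N\}^k}\mathbb{P}(a)\log\mathbb{P}(a)$ is the joint entropy of the answer vector. $U=(\mathbf{1}[c_1\in M],\dots,\mathbf{1}[c_k\in M])\in\{T,F\}^k$ and $H(D_U)$ is its joint entropy, where $\mathbb{P}(U=u)=\sum_{m_j:\ (\mathbf{1}[c_t\in m_j])_t=u}\mathbb{P}(m_j)$. $H(W_t)=-P_{W_t}\log P_{W_t}-(1-P_{W_t})\log(1-P_{W_t})$.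 Logarithms base 2, $0\log0=0$, and $-\log 0=+\infty$ (so the second term of $h^{(u)}$ is $+\infty$ if some $P_{W_t}=1$). *)

(* Defs.v *)
From Stdlib Require Import Reals Lra Lia List.
Import ListNotations.
Open Scope R_scope.

Definition log2 (x : R) : R := ln x / ln 2.

Definition plogp (x : R) : R :=
  if Req_EM_T x 0 then 0 else x * log2 x.

Definition sumR (n : nat) (f : nat -> R) : R :=
  fold_right Rplus 0 (map f (seq 0 n)).
Definition prodR (n : nat) (f : nat -> R) : R :=
  fold_right Rmult 1 (map f (seq 0 n)).

(* all vectors in {T,F}^k = {Y,N}^k, encoded as lists of booleans of length k
   (true = T resp. Y, false = F resp. N) *)
Fixpoint all_vecs (k : nat) : list (list bool) :=
  match k with
  | O => [[]]
  | S k' => map (cons true) (all_vecs k') ++ map (cons false) (all_vecs k')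
  end.

(* A result set R = {m_0,...,m_{n-1}}, each matching m_j a subset of C given by
   its membership predicate m j : C -> bool, with probabilities p j.
   Queried correspondences c_0..c_{k-1}, accuracies pw 0 .. pw (k-1). *)

Definition indic {C : Type} (k : nat) (c : nat -> C) (mj : C -> bool) : list bool :=
  map (fun t => mj (c t)) (seq 0 k).

Definition probU {C : Type} (n : nat) (m : nat -> C -> bool) (p : nat -> R)
  (k : nat) (c : nat -> C) (u : list bool) : R :=
  sumR n (fun j => if list_eq_dec Bool.bool_dec (indic k c (m j)) u then p j else 0).

(* P(A = a) = sum_j P(m_j) prod_t P(A_{c_t} = a_t | M = m_j) *)
Definition probA {C : Type} (n : nat) (m : nat -> C -> bool) (p : nat -> R)
  (k : nat) (c : nat -> C) (pw : nat -> R) (a : list bool) : R :=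
  sumR n (fun j => p j * prodR k (fun t =>
    if Bool.eqb (nth t a false) (m j (c t)) then pw t else 1 - pw t)).

Definition entropy (k : nat) (P : list bool -> R) : R :=
  - fold_right Rplus 0 (map (fun v => plogp (P v)) (all_vecs k)).

Definition H_DA {C : Type} n m p k (c : nat -> C) pw : R := entropy k (probA n m p k c pw).
Definition H_DU {C : Type} n m p k (c : nat -> C) : R := entropy k (probU n m p k c).

Definition H_W (q : R) : R := - plogp q - plogp (1 - q).

(* does some accuracy equal 1 ?  (then -sum log(1-P_W) = +infinity) *)
Definition some_one (k : nat) (pw : nat -> R) : bool :=
  existsb (fun t => if Req_EM_T (pw t) 1 then true else false) (seq 0 k).

(* h^(u)(D_A) = min{ H(D_U) + sum H(W_t), -sum log(1 - P_W_t) }, where the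
   second term is +infinity (so the min is the first term) if some P_W_t = 1 *)
Definition h_upper {C : Type} n m p k (c : nat -> C) pw : R :=
  let first := H_DU n m p k c + sumR k (fun t => H_W (pw t)) in
  if some_one k pw then first
  else Rmin first (- sumR k (fun t => log2 (1 - pw t))).

Definition h_lower {C : Type} n m p k (c : nat -> C) pw : R :=
  let pi := prodR k pw in
  let HU := H_DU n m p k c in
  Rmax (- sumR k (fun t => log2 (pw t)))
       (HU + sumR k (fun t => H_W (pw t)) + plogp pi + plogp (1 - pi)
          - (1 - pi) * Rmin (log2 (2 ^ k - 1)) HU).

(* Main.v *)
Require Import Defs.
From Stdlib Require Import Reals Lra Lia List Setoid Morphisms.
Import ListNotations.
Open Scope R_scope.


Definition lsum {A : Type} (l : list A) (f : A -> R) : R := fold_right Rplus 0 (map f l).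
Definition lprod {A : Type} (l : list A) (f : A -> R) : R := fold_right Rmult 1 (map f l).

Lemma lsum_nil {A} (f : A -> R) : lsum [] f = 0. Proof. reflexivity. Qed.
Lemma lsum_cons {A} (x : A) l f : lsum (x :: l) f = f x + lsum l f. Proof. reflexivity. Qed.
Lemma lsum_app {A} (l1 l2 : list A) f : lsum (l1 ++ l2) f = lsum l1 f + lsum l2 f.
Proof. induction l1; simpl; rewrite ?lsum_cons, ?lsum_nil in *; [ring|]. 
  unfold lsum in *; simpl. rewrite IHl1. ring. Qed.
Lemma lsum_map {A B} (g : A -> B) l f : lsum (map g l) f = lsum l (fun x => f (g x)).
Proof. unfold lsum. now rewrite map_map. Qed.
Lemma lsum_ext {A} (l : list A) f g : (forall x, In x l -> f x = g x) -> lsum l f = lsum l g.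
Proof. intro H. unfold lsum. f_equal. now apply map_ext_in. Qed.
Lemma lsum_le {A} (l : list A) f g : (forall x, In x l -> f x <= g x) -> lsum l f <= lsum l g.
Proof. induction l; intro H; rewrite ?lsum_cons, ?lsum_nil; [lra|].
  assert (f a <= g a) by (apply H; now left).
  assert (lsum l f <= lsum l g) by (apply IHl; intros; apply H; now right). lra. Qed.
Lemma lsum_plus {A} (l : list A) f g : lsum l (fun x => f x + g x) = lsum l f + lsum l g.
Proof. induction l; rewrite ?lsum_cons, ?lsum_nil; [ring|]. rewrite IHl; ring. Qed.
Lemma lsum_minus {A} (l : list A) f g : lsum l (fun x => f x - g x) = lsum l f - lsum l g.
Proof. induction l; rewrite ?lsum_cons, ?lsum_nil; [ring|]. rewrite IHl; ring. Qed.
Lemma lsum_scal {A} (l : list A) c f : lsum l (fun x => c * f x) = c * lsum l f.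
Proof. induction l; rewrite ?lsum_cons, ?lsum_nil; [ring|]. rewrite IHl; ring. Qed.
Lemma lsum_scalr {A} (l : list A) c f : lsum l (fun x => f x * c) = lsum l f * c.
Proof. induction l; rewrite ?lsum_cons, ?lsum_nil; [ring|]. rewrite IHl; ring. Qed.
Lemma lsum_const {A} (l : list A) c : lsum l (fun _ => c) = INR (length l) * c.
Proof. induction l; rewrite ?lsum_cons, ?lsum_nil; simpl length; [simpl; ring|].
  rewrite IHl, S_INR; ring. Qed.
Lemma lsum_zero {A} (l : list A) : lsum l (fun _ => 0) = 0.
Proof. rewrite lsum_const; ring. Qed.
Lemma lsum_nonneg {A} (l : list A) f : (forall x, In x l -> 0 <= f x) -> 0 <= lsum l f.
Proof. intro H. rewrite <- (lsum_zero l). now apply lsum_le. Qed.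
Lemma lsum_ge_term {A} (l : list A) f a : (forall x, In x l -> 0 <= f x) -> In a l -> f a <= lsum l f.
Proof. induction l; intros H Ha; [destruct Ha|]. rewrite lsum_cons.
  destruct Ha as [<-|Ha].
  - assert (0 <= lsum l f) by (apply lsum_nonneg; intros; apply H; now right). lra.
  - assert (0 <= f a0) by (apply H; now left).
    assert (f a <= lsum l f) by (apply IHl; auto; intros; apply H; now right). lra. Qed.
Lemma lsum_swap {A B} (l1 : list A) (l2 : list B) f :
  lsum l1 (fun x => lsum l2 (fun y => f x y)) = lsum l2 (fun y => lsum l1 (fun x => f x y)).
Proof. induction l1; rewrite ?lsum_cons, ?lsum_nil. - now rewrite lsum_zero.
  - rewrite IHl1, <- lsum_plus. reflexivity. Qed.

Section Dec.
Context {A : Type} (dec : forall x y : A, {x = y} + {x <> y}).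
Lemma lsum_ind_r (l : list A) a f : NoDup l -> In a l ->
  lsum l (fun u => if dec u a then f u else 0) = f a.
Proof. induction l; intros Hn Ha; [destruct Ha|]. inversion Hn; subst. rewrite lsum_cons.
  destruct Ha as [<-|Ha].
  - destruct (dec a0 a0); [|congruence]. rewrite (lsum_ext _ _ (fun _ => 0)), lsum_zero; [ring|].
    intros x Hx. destruct (dec x a0); subst; tauto.
  - destruct (dec a0 a); [subst; tauto|]. rewrite IHl; auto; ring. Qed.
Lemma lsum_ind_l (l : list A) a f : NoDup l -> In a l ->
  lsum l (fun u => if dec a u then f u else 0) = f a.
Proof. intros. rewrite <- (lsum_ind_r l a f) by auto. apply lsum_ext. intros x _.
  destruct (dec a x), (dec x a); subst; congruence. Qed.
End Dec.

Lemma lprod_nonneg {A} (l : list A) f : (forall x, In x l -> 0 <= f x) -> 0 <= lprod l f.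
Proof. induction l; intro H; unfold lprod in *; simpl; [lra|]. apply Rmult_le_pos.
  apply H; now left. apply IHl; intros; apply H; now right. Qed.
Lemma lprod_le {A} (l : list A) f g : (forall x, In x l -> 0 <= f x <= g x) -> lprod l f <= lprod l g.
Proof. induction l; intro H; [unfold lprod; simpl; lra|].
  assert (0 <= f a <= g a) by (apply H; now left).
  assert (0 <= lprod l f) by (apply lprod_nonneg; intros; apply H; now right).
  assert (lprod l f <= lprod l g) by (apply IHl; intros; apply H; now right).
  unfold lprod in *; simpl. apply Rmult_le_compat; lra. Qed.
Lemma lprod_pos {A} (l : list A) f : (forall x, In x l -> 0 < f x) -> 0 < lprod l f.
Proof. induction l; intro H; unfold lprod in *; simpl; [lra|]. apply Rmult_lt_0_compat.
  apply H; now left. apply IHl; intros; apply H; now right. Qed.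
Lemma lprod_ln {A} (l : list A) f : (forall x, In x l -> 0 < f x) -> ln (lprod l f) = lsum l (fun x => ln (f x)).
Proof. induction l; intro H; [apply ln_1|]. unfold lprod in *; simpl. rewrite ln_mult.
  rewrite IHl. reflexivity. intros; apply H; now right. apply H; now left.
  apply (lprod_pos l f). intros; apply H; now right. Qed.
Lemma lprod_ext {A} (l : list A) f g : (forall x, In x l -> f x = g x) -> lprod l f = lprod l g.
Proof. intro H. unfold lprod. f_equal. now apply map_ext_in. Qed.
Lemma lprod_const1 {A} (l : list A) : lprod l (fun _ => 1) = 1.
Proof. induction l; unfold lprod in *; simpl; [|rewrite IHl]; ring. Qed.

Lemma sumR_lsum n f : sumR n f = lsum (seq 0 n) f. Proof. reflexivity. Qed.
Lemma prodR_lprod n f : prodR n f = lprod (seq 0 n) f. Proof. reflexivity. Qed.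
Lemma seq_S0 k : seq 0 (S k) = 0%nat :: map S (seq 0 k).
Proof. simpl. now rewrite seq_shift. Qed.
Lemma sumR_S k f : sumR (S k) f = f 0%nat + sumR k (fun t => f (S t)).
Proof. rewrite !sumR_lsum, seq_S0, lsum_cons, lsum_map. reflexivity. Qed.
Lemma prodR_S k f : prodR (S k) f = f 0%nat * prodR k (fun t => f (S t)).
Proof. rewrite !prodR_lprod, seq_S0. unfold lprod. simpl. now rewrite map_map. Qed.
From Stdlib Require Import Setoid Morphisms.
#[export] Instance lsum_Proper {A} (l : list A) : Proper (pointwise_relation A eq ==> eq) (lsum l).
Proof. intros f g H. apply lsum_ext. intros; apply H. Qed.


Definition veq := list_eq_dec Bool.bool_dec.
Definition W (k : nat) (pw : nat -> R) (a u : list bool) : R :=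
  prodR k (fun t => if Bool.eqb (nth t a false) (nth t u false) then pw t else 1 - pw t).
Definition hb (x : R) : R := - (x * ln x) - (1 - x) * ln (1 - x).

Lemma all_vecs_S k : all_vecs (S k) = map (cons true) (all_vecs k) ++ map (cons false) (all_vecs k).
Proof. reflexivity. Qed.
Lemma in_all_vecs k v : In v (all_vecs k) <-> length v = k.
Proof. revert v; induction k; intro v.
  - simpl. split. intros [<-|[]]; reflexivity. destruct v; simpl; auto; discriminate.
  - rewrite all_vecs_S, in_app_iff, !in_map_iff. split.
    + intros [[x [<- Hx]]|[x [<- Hx]]]; simpl; f_equal; now apply IHk.
    + destruct v as [|b v]; simpl; [discriminate|]. intro H; injection H; intro H'.
      destruct b; [left|right]; exists v; split; auto; now apply IHk. Qed.
Lemma nodup_all_vecs k : NoDup (all_vecs k).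
Proof. induction k. - simpl. constructor. simpl; auto. constructor.
  - rewrite all_vecs_S. apply NoDup_app.
    + apply NoDup_map_NoDup_ForallPairs; auto. intros x y _ _ H; now injection H.
    + apply NoDup_map_NoDup_ForallPairs; auto. intros x y _ _ H; now injection H.
    + intros a Ha Hb. apply in_map_iff in Ha, Hb. destruct Ha as [x [<- _]]. destruct Hb as [y [H _]]. discriminate. Qed.
Lemma length_all_vecs k : length (all_vecs k) = (2 ^ k)%nat.
Proof. induction k; simpl; auto. rewrite length_app, !length_map, IHk. lia. Qed.
Lemma lsum_all_vecs_S k f : lsum (all_vecs (S k)) f =
  lsum (all_vecs k) (fun a => f (true :: a)) + lsum (all_vecs k) (fun a => f (false :: a)).
Proof. rewrite all_vecs_S, lsum_app, !lsum_map. reflexivity. Qed.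

Lemma W_S k pw b a u : W (S k) pw (b :: a) u =
  (if Bool.eqb b (hd false u) then pw 0%nat else 1 - pw 0%nat) * W k (fun t => pw (S t)) a (tl u).
Proof. unfold W. rewrite prodR_S. f_equal.
  - destruct u; reflexivity.
  - rewrite !prodR_lprod. apply lprod_ext. intros t _. simpl.
    replace (nth (S t) u false) with (nth t (tl u) false); [reflexivity|].
    destruct u; simpl; [destruct t|]; reflexivity. Qed.

Lemma W1 k : forall pw u, lsum (all_vecs k) (fun a => W k pw a u) = 1.
Proof. induction k; intros pw u.
  - unfold lsum, W, prodR; simpl; ring.
  - rewrite lsum_all_vecs_S. setoid_rewrite W_S. rewrite !lsum_scal, !IHk.
    destruct (hd false u); simpl; ring. Qed.

Lemma xlnx_mult x y : 0 <= x -> 0 <= y -> x * y * ln (x * y) = x * ln x * y + x * (y * ln y).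
Proof. intros Hx Hy. destruct (Req_dec x 0) as [->|Hx']; [ring|].
  destruct (Req_dec y 0) as [->|Hy']; [ring|]. rewrite ln_mult by lra. ring. Qed.

Lemma W2 k : forall pw u, (forall t, (t < k)%nat -> 0 <= pw t <= 1) ->
  lsum (all_vecs k) (fun a => W k pw a u * ln (W k pw a u)) = - sumR k (fun t => hb (pw t)).
Proof. induction k; intros pw u Hpw.
  - unfold W; simpl. unfold lsum, prodR, sumR; simpl. rewrite ln_1. ring.
  - rewrite lsum_all_vecs_S. setoid_rewrite W_S.
    assert (H0 : 0 <= pw 0%nat <= 1) by (apply Hpw; lia).
    assert (HS : forall t, (t < k)%nat -> 0 <= pw (S t) <= 1) by (intros; apply Hpw; lia).
    assert (Wnn : forall a, 0 <= W k (fun t => pw (S t)) a (tl u)).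
    { intro a. unfold W. rewrite prodR_lprod. apply lprod_nonneg. intros t Ht.
      apply in_seq in Ht. specialize (HS t ltac:(lia)). destruct Bool.eqb; lra. }
    rewrite sumR_S.
    set (x := fun b : bool => if Bool.eqb b (hd false u) then pw 0%nat else 1 - pw 0%nat).
    assert (Hx : forall b, 0 <= x b) by (intro b; unfold x; destruct Bool.eqb; lra).
    rewrite (lsum_ext _ _ (fun a => x true * ln (x true) * W k (fun t => pw (S t)) a (tl u)
        + x true * (W k (fun t => pw (S t)) a (tl u) * ln (W k (fun t => pw (S t)) a (tl u)))))
      by (intros; now apply xlnx_mult).
    rewrite (lsum_ext _ (fun a => x false * W _ _ a _ * _) (fun a => x false * ln (x false) * W k (fun t => pw (S t)) a (tl u)
        + x false * (W k (fun t => pw (S t)) a (tl u) * ln (W k (fun t => pw (S t)) a (tl u)))))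
      by (intros; now apply xlnx_mult).
    rewrite !lsum_plus, !lsum_scal, W1, IHk by auto. unfold x, hb.
    destruct (hd false u); simpl; ring. Qed.



Lemma indic_nth {C : Type} k (c : nat -> C) mj t : (t < k)%nat -> nth t (indic k c mj) false = mj (c t).
Proof. intro Ht. unfold indic. rewrite nth_indep with (d' := (fun t => mj (c t)) 0%nat).
  - rewrite (map_nth (fun t => mj (c t))), seq_nth; auto.
  - now rewrite length_map, length_seq. Qed.
Lemma indic_in {C : Type} k (c : nat -> C) mj : In (indic k c mj) (all_vecs k).
Proof. apply in_all_vecs. unfold indic. now rewrite length_map, length_seq. Qed.

Lemma probA_eq {C : Type} n m p k (c : nat -> C) pw a :
  probA n m p k c pw a = lsum (all_vecs k) (fun u => probU n m p k c u * W k pw a u).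
Proof.
  unfold probA, probU. rewrite sumR_lsum.
  setoid_rewrite sumR_lsum. setoid_rewrite <- lsum_scalr. rewrite lsum_swap.
  apply lsum_ext. intros j _.
  rewrite (lsum_ext _ _ (fun u => if list_eq_dec Bool.bool_dec (indic k c (m j)) u then p j * W k pw a u else 0)).
  2:{ intros u _. destruct list_eq_dec; ring. }
  rewrite (lsum_ind_l (list_eq_dec Bool.bool_dec)) by (apply nodup_all_vecs || apply indic_in).
  f_equal. unfold W. rewrite !prodR_lprod. apply lprod_ext. intros t Ht. apply in_seq in Ht.
  rewrite indic_nth by lia. reflexivity. Qed.

Lemma probU_nonneg {C : Type} n m p k (c : nat -> C) u :
  (forall j, (j < n)%nat -> 0 <= p j) -> 0 <= probU n m p k c u.
Proof. intro H. unfold probU. rewrite sumR_lsum. apply lsum_nonneg. intros j Hj.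
  apply in_seq in Hj. destruct list_eq_dec; [apply H; lia|lra]. Qed.

Lemma probU_sum {C : Type} n m p k (c : nat -> C) :
  sumR n p = 1 -> lsum (all_vecs k) (fun u => probU n m p k c u) = 1.
Proof. intro H. unfold probU. setoid_rewrite sumR_lsum. rewrite lsum_swap.
  rewrite <- H, sumR_lsum. apply lsum_ext. intros j _.
  apply (lsum_ind_l (list_eq_dec Bool.bool_dec) _ _ (fun _ => p j)).
  apply nodup_all_vecs. apply indic_in. Qed.


Definition Pq k pw (q : list bool -> R) a := lsum (all_vecs k) (fun u => q u * W k pw a u).
Definition Ent k (f : list bool -> R) := - lsum (all_vecs k) (fun v => f v * ln (f v)).
Definition Hw k pw := sumR k (fun t => hb (pw t)).
Definition PiW k pw := prodR k pw.

Definition pwok k pw := forall t, (t < k)%nat -> / 2 <= pw t <= 1.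

Lemma factor_bounds k pw b1 b2 t : pwok k pw -> (t < k)%nat ->
  0 <= 1 - pw t <= (if Bool.eqb b1 b2 then pw t else 1 - pw t) /\
  (if Bool.eqb b1 b2 then pw t else 1 - pw t) <= pw t.
Proof. intros H Ht. specialize (H t Ht). destruct Bool.eqb; lra. Qed.

Lemma W_nonneg k pw a u : pwok k pw -> 0 <= W k pw a u.
Proof. intro H. unfold W. rewrite prodR_lprod. apply lprod_nonneg. intros t Ht. apply in_seq in Ht.
  destruct (factor_bounds k pw (nth t a false) (nth t u false) t H ltac:(lia)); lra. Qed.
Lemma W_le_pi k pw a u : pwok k pw -> W k pw a u <= PiW k pw.
Proof. intro H. unfold W, PiW. rewrite !prodR_lprod. apply lprod_le. intros t Ht. apply in_seq in Ht.
  destruct (factor_bounds k pw (nth t a false) (nth t u false) t H ltac:(lia)); lra. Qed.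
Lemma W_ge_rho k pw a u : pwok k pw -> prodR k (fun t => 1 - pw t) <= W k pw a u.
Proof. intro H. unfold W. rewrite !prodR_lprod. apply lprod_le. intros t Ht. apply in_seq in Ht.
  destruct (factor_bounds k pw (nth t a false) (nth t u false) t H ltac:(lia)); lra. Qed.
Lemma W_diag k pw u : W k pw u u = PiW k pw.
Proof. unfold W, PiW. rewrite !prodR_lprod. apply lprod_ext. intros. now rewrite Bool.eqb_reflx. Qed.
Lemma PiW_pos k pw : pwok k pw -> 0 < PiW k pw.
Proof. intro H. unfold PiW. rewrite prodR_lprod. apply lprod_pos. intros t Ht. apply in_seq in Ht.
  specialize (H t ltac:(lia)). lra. Qed.
Lemma PiW_le1 k pw : pwok k pw -> PiW k pw <= 1.
Proof. intro H. unfold PiW. rewrite prodR_lprod, <- (lprod_const1 (seq 0 k)). apply lprod_le.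
  intros t Ht. apply in_seq in Ht. specialize (H t ltac:(lia)). lra. Qed.

Lemma W_offsum k pw u : In u (all_vecs k) ->
  lsum (all_vecs k) (fun a => if veq u a then 0 else W k pw a u) = 1 - PiW k pw.
Proof. intro Hu. rewrite <- (W1 k pw u), <- (W_diag k pw u).
  rewrite <- (lsum_ind_l veq (all_vecs k) u (fun a => W k pw a u)) by (auto using nodup_all_vecs).
  rewrite <- lsum_minus. apply lsum_ext. intros; destruct veq; ring. Qed.

Lemma W_off k pw a u : pwok k pw -> In a (all_vecs k) -> In u (all_vecs k) -> a <> u ->
  W k pw a u <= 1 - PiW k pw.
Proof. intros H Ha Hu Hau. rewrite <- (W_offsum k pw u Hu).
  eapply Rle_trans; [|apply (lsum_ge_term _ (fun a => if veq u a then 0 else W k pw a u) a); auto].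
  - simpl. destruct veq; [congruence|lra].
  - intros; destruct veq; [lra|now apply W_nonneg]. Qed.


Lemma ln_le x y : 0 < x -> x <= y -> ln x <= ln y.
Proof. intros Hx Hxy. destruct (Req_dec x y) as [->|H]; [lra|]. left. apply ln_increasing; lra. Qed.

Lemma gibbs J Q : 0 < J -> 0 < Q -> J * (ln Q - ln J) <= Q - J.
Proof. intros HJ HQ. replace Q with (J * (Q / J)) at 1 by (field; lra).
  rewrite ln_mult by (try apply Rdiv_lt_0_compat; lra).
  assert (H := exp_ineq1_le (ln (Q / J))). rewrite exp_ln in H by (apply Rdiv_lt_0_compat; lra).
  replace (J * (ln J + ln (Q / J) - ln J)) with (J * ln (Q / J)) by ring.
  replace (Q - J) with (J * (Q / J - 1)) by (field; lra).
  apply Rmult_le_compat_l; lra. Qed.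


Lemma P1 k pw q : lsum (all_vecs k) q = 1 -> lsum (all_vecs k) (Pq k pw q) = 1.
Proof. intro H. unfold Pq. rewrite lsum_swap. rewrite <- H. apply lsum_ext. intros u _.
  rewrite lsum_scal, W1. ring. Qed.

Lemma P_nonneg k pw q a : pwok k pw -> (forall u, 0 <= q u) -> 0 <= Pq k pw q a.
Proof. intros H Hq. unfold Pq. apply lsum_nonneg. intros. apply Rmult_le_pos; auto. now apply W_nonneg. Qed.

Lemma J_le_P k pw q a u : pwok k pw -> (forall u, 0 <= q u) -> In u (all_vecs k) -> q u * W k pw a u <= Pq k pw q a.
Proof. intros H Hq Hu. unfold Pq. apply (lsum_ge_term _ (fun u => q u * W k pw a u)); auto.
  intros. apply Rmult_le_pos; auto. now apply W_nonneg. Qed.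

Lemma JJ k pw q : pwok k pw -> (forall u, 0 <= q u) -> lsum (all_vecs k) q = 1 ->
  lsum (all_vecs k) (fun a => lsum (all_vecs k) (fun u => q u * W k pw a u * ln (q u * W k pw a u)))
  = - (Ent k q + Hw k pw).
Proof. intros H Hq H1. rewrite lsum_swap. unfold Ent, Hw.
  rewrite (lsum_ext _ _ (fun u => q u * ln (q u) + q u * (- sumR k (fun t => hb (pw t))))).
  - rewrite lsum_plus, lsum_scalr, H1. ring.
  - intros u _. rewrite (lsum_ext _ _ (fun a => q u * ln (q u) * W k pw a u + q u * (W k pw a u * ln (W k pw a u)))).
    + rewrite lsum_plus, !lsum_scal, W1, W2. ring.
      intros t Ht; specialize (H t Ht); lra.
    + intros a _. apply xlnx_mult; auto. now apply W_nonneg. Qed.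

Lemma JP k pw q :
  lsum (all_vecs k) (fun a => lsum (all_vecs k) (fun u => q u * W k pw a u * ln (Pq k pw q a)))
  = - Ent k (Pq k pw q).
Proof. unfold Ent. rewrite Ropp_involutive. apply lsum_ext. intros a _. now rewrite lsum_scalr. Qed.

Lemma U1 k pw q : pwok k pw -> (forall u, 0 <= q u) -> lsum (all_vecs k) q = 1 ->
  Ent k (Pq k pw q) <= Ent k q + Hw k pw.
Proof. intros H Hq H1. assert (A := JJ k pw q H Hq H1). assert (B := JP k pw q).
  enough (lsum (all_vecs k) (fun a => lsum (all_vecs k) (fun u => q u * W k pw a u * ln (q u * W k pw a u)))
    <= lsum (all_vecs k) (fun a => lsum (all_vecs k) (fun u => q u * W k pw a u * ln (Pq k pw q a)))) by lra.
  apply lsum_le. intros a Ha. apply lsum_le. intros u Hu.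
  assert (0 <= q u * W k pw a u) by (apply Rmult_le_pos; auto; now apply W_nonneg).
  assert (q u * W k pw a u <= Pq k pw q a) by (now apply J_le_P).
  destruct (Req_dec (q u * W k pw a u) 0) as [E|E]; [rewrite E; lra|].
  apply Rmult_le_compat_l; auto. apply ln_le; lra. Qed.

Lemma U2 k pw q : pwok k pw -> (forall u, 0 <= q u) -> lsum (all_vecs k) q = 1 ->
  (forall t, (t < k)%nat -> pw t < 1) ->
  Ent k (Pq k pw q) <= - sumR k (fun t => ln (1 - pw t)).
Proof. intros H Hq H1 Hlt. set (rho := prodR k (fun t => 1 - pw t)).
  assert (Hr : 0 < rho). { unfold rho. rewrite prodR_lprod. apply lprod_pos. intros t Ht.
    apply in_seq in Ht. specialize (Hlt t ltac:(lia)). lra. }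
  assert (Hl : ln rho = sumR k (fun t => ln (1 - pw t))). { unfold rho. rewrite prodR_lprod, lprod_ln. reflexivity.
    intros t Ht. apply in_seq in Ht. specialize (Hlt t ltac:(lia)). lra. }
  rewrite <- Hl. unfold Ent.
  assert (HP : forall a, rho <= Pq k pw q a). { intro a. unfold Pq. rewrite <- (Rmult_1_r rho), <- H1, <- lsum_scal.
    apply lsum_le. intros u _. rewrite Rmult_comm. apply Rmult_le_compat_l; auto. now apply W_ge_rho. }
  enough (ln rho <= lsum (all_vecs k) (fun v => Pq k pw q v * ln (Pq k pw q v))) by lra.
  rewrite <- (Rmult_1_r (ln rho)), <- (P1 k pw q H1), <- lsum_scal.
  apply lsum_le. intros a _. rewrite Rmult_comm. apply Rmult_le_compat_l.
  - now apply P_nonneg. - apply ln_le; auto. Qed.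

Lemma L1 k pw q : pwok k pw -> (forall u, 0 <= q u) -> lsum (all_vecs k) q = 1 ->
  - sumR k (fun t => ln (pw t)) <= Ent k (Pq k pw q).
Proof. intros H Hq H1.
  assert (Hl : ln (PiW k pw) = sumR k (fun t => ln (pw t))). { unfold PiW. rewrite prodR_lprod, lprod_ln. reflexivity.
    intros t Ht. apply in_seq in Ht. specialize (H t ltac:(lia)). lra. }
  rewrite <- Hl. unfold Ent.
  assert (HP : forall a, Pq k pw q a <= PiW k pw). { intro a. unfold Pq. rewrite <- (Rmult_1_r (PiW k pw)), <- H1, <- lsum_scal.
    apply lsum_le. intros u _. rewrite (Rmult_comm (PiW k pw)). apply Rmult_le_compat_l; auto. now apply W_le_pi. }
  enough (lsum (all_vecs k) (fun v => Pq k pw q v * ln (Pq k pw q v)) <= ln (PiW k pw)) by lra.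
  rewrite <- (Rmult_1_r (ln (PiW k pw))), <- (P1 k pw q H1), <- lsum_scal.
  apply lsum_le. intros a _. rewrite (Rmult_comm (ln (PiW k pw))).
  assert (0 <= Pq k pw q a) by (now apply P_nonneg).
  destruct (Req_dec (Pq k pw q a) 0) as [E|E]; [rewrite E; lra|].
  apply Rmult_le_compat_l; auto. apply ln_le; auto; lra. Qed.


Lemma Jdiag k pw q (g : R) :
  lsum (all_vecs k) (fun a => lsum (all_vecs k) (fun u => if veq u a then q u * W k pw a u * g else 0))
  = lsum (all_vecs k) q * PiW k pw * g.
Proof. rewrite <- !lsum_scalr. apply lsum_ext. intros a Ha.
  rewrite (lsum_ind_r veq _ a (fun u => q u * W k pw a u * g)) by auto using nodup_all_vecs.
  now rewrite W_diag. Qed.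

Lemma Joff k pw q : lsum (all_vecs k) q = 1 ->
  lsum (all_vecs k) (fun a => lsum (all_vecs k) (fun u => if veq u a then 0 else q u * W k pw a u))
  = 1 - PiW k pw.
Proof. intro H1.
  assert (E : forall a, lsum (all_vecs k) (fun u => if veq u a then 0 else q u * W k pw a u) =
     lsum (all_vecs k) (fun u => q u * W k pw a u) - lsum (all_vecs k) (fun u => if veq u a then q u * W k pw a u * 1 else 0)).
  { intro a. rewrite <- lsum_minus. apply lsum_ext. intros; destruct veq; ring. }
  setoid_rewrite E. rewrite lsum_minus, Jdiag, H1. fold (Pq k pw q). rewrite P1 by auto. ring. Qed.

Lemma L2gen k pw q (d : list bool -> list bool -> R) :
  pwok k pw -> (forall u, 0 <= q u) -> lsum (all_vecs k) q = 1 ->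
  (forall a u, In a (all_vecs k) -> In u (all_vecs k) -> 0 <= d a u) ->
  (forall a, In a (all_vecs k) -> lsum (all_vecs k) (fun u => if veq u a then PiW k pw else d a u) <= 1) ->
  (forall a u, In a (all_vecs k) -> In u (all_vecs k) -> u <> a -> 0 < q u * W k pw a u -> 0 < d a u) ->
  Ent k q + Hw k pw - Ent k (Pq k pw q) <=
  PiW k pw * (- ln (PiW k pw)) +
  lsum (all_vecs k) (fun a => lsum (all_vecs k) (fun u => if veq u a then 0 else q u * W k pw a u * (- ln (d a u)))).
Proof. intros H Hq H1 Hd0 Hds Hdp.
  assert (A := JJ k pw q H Hq H1). assert (B := JP k pw q).
  set (c := fun a u => if veq u a then PiW k pw else d a u).
  assert (Hpt : forall a u, In a (all_vecs k) -> In u (all_vecs k) ->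
     q u * W k pw a u * ln (Pq k pw q a) - q u * W k pw a u * ln (q u * W k pw a u) <=
     (Pq k pw q a * c a u - q u * W k pw a u) +
     (if veq u a then q u * W k pw a u * (- ln (PiW k pw)) else 0) +
     (if veq u a then 0 else q u * W k pw a u * (- ln (d a u)))).
  { intros a u Ha Hu.
    assert (HJ : 0 <= q u * W k pw a u) by (apply Rmult_le_pos; auto; now apply W_nonneg).
    assert (HJP := J_le_P k pw q a u H Hq Hu).
    assert (Hc : 0 <= c a u) by (unfold c; destruct veq; [left; now apply PiW_pos|auto]).
    destruct (Req_dec (q u * W k pw a u) 0) as [E|E].
    - rewrite E. assert (0 <= Pq k pw q a * c a u) by (apply Rmult_le_pos; lra).
      destruct veq; lra.
    - assert (HJ' : 0 < q u * W k pw a u) by lra.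
      assert (Hc' : 0 < c a u). { unfold c. destruct veq. now apply PiW_pos. apply Hdp; auto. }
      assert (G := gibbs (q u * W k pw a u) (Pq k pw q a * c a u) HJ' ltac:(apply Rmult_lt_0_compat; lra)).
      rewrite ln_mult in G by lra.
      unfold c in *. destruct veq; lra. }
  assert (S := lsum_le _ _ _ (fun a Ha => lsum_le _ _ _ (fun u Hu => Hpt a u Ha Hu))).
  simpl in S. rewrite lsum_ext with (g := fun a => lsum (all_vecs k) (fun u => q u * W k pw a u * ln (Pq k pw q a))
     - lsum (all_vecs k) (fun u => q u * W k pw a u * ln (q u * W k pw a u))) in S
     by (intros; apply lsum_minus).
  rewrite lsum_minus, A, B in S.
  rewrite lsum_ext with (g := fun a => lsum (all_vecs k) (fun u => Pq k pw q a * c a u - q u * W k pw a u)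
      + lsum (all_vecs k) (fun u => if veq u a then q u * W k pw a u * (- ln (PiW k pw)) else 0)
      + lsum (all_vecs k) (fun u => if veq u a then 0 else q u * W k pw a u * (- ln (d a u)))) in S
     by (intros; now rewrite <- !lsum_plus).
  rewrite !lsum_plus, Jdiag, H1 in S.
  assert (T : lsum (all_vecs k) (fun a => lsum (all_vecs k) (fun u => Pq k pw q a * c a u - q u * W k pw a u)) <= 0).
  { rewrite lsum_ext with (g := fun a => Pq k pw q a * lsum (all_vecs k) (fun u => c a u) - Pq k pw q a)
      by (intros; rewrite lsum_minus, lsum_scal; reflexivity).
    rewrite lsum_minus.
    enough (lsum (all_vecs k) (fun a => Pq k pw q a * lsum (all_vecs k) (fun u => c a u)) <= lsum (all_vecs k) (Pq k pw q)) by lra.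
    apply lsum_le. intros a Ha.
    rewrite <- (Rmult_1_r (Pq k pw q a)) at 2. apply Rmult_le_compat_l. now apply P_nonneg. now apply Hds. }
  lra. Qed.


Lemma W_pos_off k pw q a u : pwok k pw -> (forall u, 0 <= q u) -> In a (all_vecs k) -> In u (all_vecs k) -> u <> a ->
  0 < q u * W k pw a u -> 0 < q u /\ 0 < 1 - PiW k pw.
Proof. intros H Hq Ha Hu Hua HJ. assert (0 <= W k pw a u) by now apply W_nonneg.
  assert (W k pw a u <= 1 - PiW k pw) by (apply W_off; auto).
  specialize (Hq u). destruct (Req_dec (q u) 0) as [E|E]; [rewrite E in HJ; lra|].
  destruct (Req_dec (W k pw a u) 0) as [E'|E']; [rewrite E' in HJ; lra|]. lra. Qed.

Lemma pow2_ge2 k : (1 <= k)%nat -> 2 <= 2 ^ k.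
Proof. intro Hk. destruct k; [lia|]. simpl. assert (1 <= 2 ^ k) by (apply pow_R1_Rle; lra). lra. Qed.

Lemma FanoA k pw q : (1 <= k)%nat -> pwok k pw -> (forall u, 0 <= q u) -> lsum (all_vecs k) q = 1 ->
  Ent k q + Hw k pw - Ent k (Pq k pw q) <= hb (PiW k pw) + (1 - PiW k pw) * ln (2 ^ k - 1).
Proof. intros Hk H Hq H1.
  assert (HN := pow2_ge2 k Hk). assert (HP := PiW_pos k pw H). assert (HP1 := PiW_le1 k pw H).
  set (d := (1 - PiW k pw) / (2 ^ k - 1)).
  assert (Hd : 0 <= d) by (unfold d; apply Rmult_le_pos; [lra|left; apply Rinv_0_lt_compat; lra]).
  eapply Rle_trans; [apply (L2gen k pw q (fun _ _ => d)); auto|].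
  - intros a Ha. 
    rewrite (lsum_ext _ _ (fun u => (if veq u a then PiW k pw - d else 0) + d)) by (intros; destruct veq; ring).
    rewrite lsum_plus, (lsum_ind_r veq _ a (fun _ => PiW k pw - d)) by auto using nodup_all_vecs.
    rewrite lsum_const, length_all_vecs, pow_INR. replace (INR 2) with 2 by (simpl; ring). right. unfold d. field. lra.
  - intros a u Ha Hu Hua HJ. destruct (W_pos_off k pw q a u H Hq Ha Hu Hua HJ). unfold d.
    apply Rdiv_lt_0_compat; lra.
  - rewrite (lsum_ext _ _ (fun a => lsum (all_vecs k) (fun u => if veq u a then 0 else q u * W k pw a u) * (- ln d))).
    2:{ intros a _. rewrite <- lsum_scalr. apply lsum_ext. intros; destruct veq; ring. }
    rewrite lsum_scalr, Joff by auto. unfold hb, d.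
    destruct (Req_dec (PiW k pw) 1) as [E|E].
    + rewrite E. replace (1 - 1) with 0 by ring. right. ring.
    + unfold Rdiv. rewrite ln_mult, ln_Rinv by (try apply Rinv_0_lt_compat; lra). right. ring. Qed.

Lemma FanoB k pw q : pwok k pw -> (forall u, 0 <= q u) -> lsum (all_vecs k) q = 1 ->
  Ent k q + Hw k pw - Ent k (Pq k pw q) <= hb (PiW k pw) + (1 - PiW k pw) * Ent k q.
Proof. intros H Hq H1.
  assert (HP := PiW_pos k pw H). assert (HP1 := PiW_le1 k pw H).
  eapply Rle_trans; [apply (L2gen k pw q (fun _ u => (1 - PiW k pw) * q u)); auto|].
  - intros; apply Rmult_le_pos; auto; lra.
  - intros a Ha.
    apply Rle_trans with (lsum (all_vecs k) (fun u => (if veq u a then PiW k pw else 0) + (1 - PiW k pw) * q u)).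
    + apply lsum_le. intros u _. assert (0 <= (1 - PiW k pw) * q u) by (apply Rmult_le_pos; auto; lra).
      destruct veq; lra.
    + rewrite lsum_plus, (lsum_ind_r veq _ a (fun _ => PiW k pw)) by auto using nodup_all_vecs.
      rewrite lsum_scal, H1. lra.
  - intros a u Ha Hu Hua HJ. destruct (W_pos_off k pw q a u H Hq Ha Hu Hua HJ).
    apply Rmult_lt_0_compat; lra.
  - assert (Hpt : forall a u, In a (all_vecs k) -> In u (all_vecs k) ->
       (if veq u a then 0 else q u * W k pw a u * - ln ((1 - PiW k pw) * q u)) =
       (if veq u a then 0 else q u * W k pw a u) * (- ln (1 - PiW k pw)) +
       (if veq u a then 0 else W k pw a u) * (- (q u * ln (q u)))).
    { intros a u Ha Hu. destruct veq as [e|ne]; [ring|].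
      destruct (Req_dec (q u * W k pw a u) 0) as [E|E].
      - replace (W k pw a u * - (q u * ln (q u))) with (q u * W k pw a u * - ln (q u)) by ring.
        rewrite E. ring.
      - assert (0 <= q u * W k pw a u) by (apply Rmult_le_pos; auto; now apply W_nonneg).
        destruct (W_pos_off k pw q a u H Hq Ha Hu ne ltac:(lra)).
        rewrite ln_mult by lra. ring. }
    rewrite (lsum_ext _ _ (fun a => lsum (all_vecs k) (fun u => (if veq u a then 0 else q u * W k pw a u) * (- ln (1 - PiW k pw)))
        + lsum (all_vecs k) (fun u => (if veq u a then 0 else W k pw a u) * (- (q u * ln (q u)))))).
    2:{ intros a Ha. rewrite <- lsum_plus. apply lsum_ext. intros u Hu. now apply Hpt. }
    rewrite lsum_plus. setoid_rewrite lsum_scalr. rewrite lsum_scalr, Joff by auto.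
    rewrite lsum_swap. setoid_rewrite lsum_scalr.
    rewrite (lsum_ext _ _ (fun u => (1 - PiW k pw) * - (q u * ln (q u)))).
    2:{ intros u Hu. f_equal. now apply W_offsum. }
    rewrite lsum_scal. unfold Ent, hb.
    rewrite (lsum_ext _ (fun u => - _) (fun u => -1 * (q u * ln (q u)))) by (intros; ring).
    rewrite lsum_scal. right. ring. Qed.


Lemma ln_0 : ln 0 = 0.
Proof. unfold ln. destruct (Rlt_dec 0 0) as [h|h]; [exfalso; exact (Rlt_irrefl 0 h)|reflexivity]. Qed.
Lemma ln2_pos : 0 < ln 2.
Proof. rewrite <- ln_1. apply ln_increasing; lra. Qed.
Lemma plogp_eq x : plogp x = x * ln x / ln 2.
Proof. unfold plogp, log2. destruct Req_EM_T as [->|_]; unfold Rdiv; ring. Qed.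
Lemma entropy_eq k f : entropy k f = Ent k f / ln 2.
Proof. unfold entropy, Ent. fold (lsum (all_vecs k) (fun v => plogp (f v))).
  setoid_rewrite plogp_eq. unfold Rdiv. rewrite lsum_scalr. ring. Qed.
Lemma sumR_div k f : sumR k (fun t => f t / ln 2) = sumR k f / ln 2.
Proof. rewrite !sumR_lsum. unfold Rdiv. apply lsum_scalr. Qed.

Lemma some_one_false k pw : some_one k pw = false -> forall t, (t < k)%nat -> pw t <> 1.
Proof. intros Hs t Ht E. unfold some_one in Hs.
  assert (existsb (fun t => if Req_EM_T (pw t) 1 then true else false) (seq 0 k) = true).
  { apply existsb_exists. exists t. split; [apply in_seq; lia|]. destruct Req_EM_T; congruence. }
  congruence. Qed.

Theorem theorem4p2 (C : Type) (n : nat) (m : nat -> C -> bool) (p : nat -> R)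
  (k : nat) (c : nat -> C) (pw : nat -> R)
  (Hk : (1 <= k)%nat)
  (Hm : forall i j, (i < n)%nat -> (j < n)%nat -> i <> j -> m i <> m j)
  (Hp0 : forall j, (j < n)%nat -> 0 <= p j)
  (Hp1 : sumR n p = 1)
  (Hc : forall s t, (s < k)%nat -> (t < k)%nat -> s <> t -> c s <> c t)
  (Hpw : forall t, (t < k)%nat -> / 2 <= pw t <= 1) :
  h_lower n m p k c pw <= H_DA n m p k c pw <= h_upper n m p k c pw.
Proof.
  set (q := probU n m p k c).
  assert (Hok : pwok k pw) by exact Hpw.
  assert (Hq0 : forall u, 0 <= q u) by (intro; now apply probU_nonneg).
  assert (Hq1 : lsum (all_vecs k) q = 1) by (now apply probU_sum).
  assert (HA : H_DA n m p k c pw = Ent k (Pq k pw q) / ln 2).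
  { unfold H_DA. rewrite entropy_eq. f_equal. unfold Ent. f_equal. apply lsum_ext. intros v _.
    rewrite probA_eq. reflexivity. }
  assert (HU : H_DU n m p k c = Ent k q / ln 2) by (unfold H_DU; apply entropy_eq).
  assert (HW : sumR k (fun t => H_W (pw t)) = Hw k pw / ln 2).
  { unfold Hw. rewrite <- sumR_div. rewrite !sumR_lsum. apply lsum_ext. intros t _.
    unfold H_W, hb. rewrite !plogp_eq. field. generalize ln2_pos; lra. }
  assert (L := ln2_pos).
  assert (U1' := U1 k pw q Hok Hq0 Hq1).
  assert (L1' := L1 k pw q Hok Hq0 Hq1).
  assert (FA := FanoA k pw q Hk Hok Hq0 Hq1).
  assert (FB := FanoB k pw q Hok Hq0 Hq1).
  assert (HP := PiW_pos k pw Hok). assert (HP1 := PiW_le1 k pw Hok).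
  assert (DM : forall x y, x <= y -> x / ln 2 <= y / ln 2).
  { intros x y Hxy. unfold Rdiv. apply Rmult_le_compat_r; [left; now apply Rinv_0_lt_compat|exact Hxy]. }
  split.
  - unfold h_lower. fold (PiW k pw). rewrite HA, HU, HW. apply Rmax_lub.
    + unfold log2. rewrite sumR_div.
      replace (- (sumR k (fun t => ln (pw t)) / ln 2)) with ((- sumR k (fun t => ln (pw t))) / ln 2) by (field; lra).
      apply DM; lra.
    + rewrite !plogp_eq. unfold log2. unfold Rmin. destruct Rle_dec as [Hle|Hle].
      * match goal with |- ?L <= _ => replace L with ((Ent k q + Hw k pw - hb (PiW k pw) - (1 - PiW k pw) * ln (2 ^ k - 1)) / ln 2) by (unfold hb; field; lra) end.
        apply DM; lra.
      * match goal with |- ?L <= _ => replace L with ((Ent k q + Hw k pw - hb (PiW k pw) - (1 - PiW k pw) * Ent k q) / ln 2) by (unfold hb; field; lra) end.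
        apply DM; lra.
  - unfold h_upper. rewrite HA, HU, HW.
    assert (F : Ent k (Pq k pw q) / ln 2 <= Ent k q / ln 2 + Hw k pw / ln 2).
    { replace (Ent k q / ln 2 + Hw k pw / ln 2) with ((Ent k q + Hw k pw) / ln 2) by (field; lra). now apply DM. }
    destruct (some_one k pw) eqn:Es; [exact F|]. apply Rmin_glb; [exact F|].
    assert (Hlt : forall t, (t < k)%nat -> pw t < 1).
    { intros t Ht. assert (pw t <> 1) by (now apply (some_one_false k pw)). specialize (Hpw t Ht). lra. }
    assert (U2' := U2 k pw q Hok Hq0 Hq1 Hlt).
    unfold log2. rewrite sumR_div.
    replace (- (sumR k (fun t => ln (1 - pw t)) / ln 2)) with ((- sumR k (fun t => ln (1 - pw t))) / ln 2) by (field; lra).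
    now apply DM.
Qed.
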